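(* Every Markov system is equivalent to a Markov system satisfying property ( * ).
   Context: A Markov system is a tuple $\mathbb{M}=(a,b,[a],[b],[b^{-1}])$ with $a$ an orientation-preserving involution of $S^1$, $b$ an orientation-preserving homeomorphism of $S^1$ of period three, and $[a],[b],[b^{-1}]\subset S^1$ such that: (A) they are pairwise disjoint, each a union of $k$ disjoint closed intervals ($k\in\mathbb{N}$, the multiplicity); components are $a$-, $b$-, $b^{-1}$-intervals; $X=[a]\cup[b]\cup[b^{-1}]$; (B) no two $a$-intervals are consecutive among the components of $X$ in circular order; likewise for $b$- and for $b^{-1}$-intervals; with principal gaps (gaps of $X$ between an $a$-interval and a $b^{\pm1}$-interval), complementary gaps (between a $b$- and a $b^{-1}$-interval), $b$-blocks (maximal intervals made of $b^{\pm1}$-intervals and complementary gaps) and $[[b]]$ the union of $b$-blocks: (C) $a([a])=[[b]]$; (D) $b([a])=[b]$, $b([b])=[b^{-1}]$; (E) $a$ maps principal gaps to principal gaps and exactly one of $b^{\pm1}$ maps a given principal gap to a principal gap; the graph on principal gaps joining $J$ to $a(J)$ and to that image is connected (the principal gaps form one cycle). Two Markov systems are equivalent if an orientation-preserving homeomorphism of $S^1$ sends $[a],[b],[b^{-1}]$ onto $[a'],[b'],[b'^{-1}]$. By (E), the principal gaps can be enumerated $I_1,I_1',I_2,I_2',\dots,I_k,I_k'$ so that for each $i$ there is $b_i\in\{b,b^{-1}\}$ with $b_i(I_i)=I_i'$ and $a(I_i')=I_{i+1}$ (indices mod $k$). Put $f_1=a\circ b_k\circ a\circ b_{k-1}\circ\cdots\circ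 a\circ b_1$, which maps $I_1$ to itself. Property ( * ): for such an enumeration, $f_1$ has no fixed point in the open interval $I_1$, and for every $z\in I_1$, $f_1^n(z)$ converges as $n\to\infty$ to the endpoint of $I_1$ lying in $[a]$. *)

(* Defs.v *)
(* Points of S^1 are represented by
   real numbers (mod 1), subsets of S^1 by (1-periodic) predicates on R, and
   orientation-preserving homeomorphisms of S^1 by their lifts: continuous
   strictly increasing maps F : R -> R with F (x+1) = F x + 1. *)
From Stdlib Require Import Reals Relations.
Open Scope R_scope.

Definition eqc (x y : R) : Prop := exists m : Z, y = x + IZR m.

Definition cdist (x y : R) : R :=
  Rmin (frac_part (x - y)) (1 - frac_part (x - y)).

Definition is_circ_homeo (F : R -> R) : Prop :=
  continuity F /\ (forall x y, x < y -> F x < F y) /\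
  (forall x, F (x + 1) = F x + 1).

Definition cset := R -> Prop.

Definition img (F : R -> R) (S : cset) : cset :=
  fun y => exists x, S x /\ eqc (F x) y.

Definition seteq (S T : cset) : Prop := forall x, S x <-> T x.

Record msys := MSys {
  ma : R -> R; mb : R -> R;
  setA : cset; setB : cset; setBi : cset }.

Inductive kind := KA | KB | KBi.

Definition kind_eqb (x y : kind) : bool :=
  match x, y with KA, KA | KB, KB | KBi, KBi => true | _, _ => false end.

(* Layout of X: its N components in circular order are the arcs
   [l i, r i] (mod 1), i < N, with
   l 0 < r 0 < l 1 < r 1 < ... < l (N-1) < r (N-1) < l 0 + 1,
   and component i is an a-, b- or b^{-1}-interval according to lab i. *)
Record layout := Layout {
  lN : nat; ll : nat -> R; lr : nat -> R; lab : nat -> kind }.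

Definition nxt (L : layout) (i : nat) : nat :=
  if Nat.ltb (S i) (lN L) then S i else O.

Definition lnext (L : layout) (i : nat) : R :=
  if Nat.ltb (S i) (lN L) then ll L (S i) else ll L O + 1.

Definition layout_ok (L : layout) : Prop :=
  (forall i, (i < lN L)%nat -> ll L i < lr L i) /\
  (forall i, (i < lN L)%nat -> lr L i < lnext L i).

Definition inU (L : layout) (K : kind) : cset :=
  fun x => exists i, (i < lN L)%nat /\ lab L i = K /\
           exists m : Z, ll L i <= x + IZR m <= lr L i.

Fixpoint cnt (lab : nat -> kind) (K : kind) (n : nat) : nat :=
  match n with
  | O => O
  | S n => (cnt lab K n + (if kind_eqb (lab n) K then 1 else 0))%nat
  end.

Definition gapS (L : layout) (i : nat) : cset :=
  fun x => exists m : Z, lr L i < x + IZR m < lnext L i.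

Definition principal (L : layout) (i : nat) : Prop :=
  (i < lN L)%nat /\ (lab L i = KA \/ lab L (nxt L i) = KA).

Definition complementary (L : layout) (i : nat) : Prop :=
  (i < lN L)%nat /\ lab L i <> KA /\ lab L (nxt L i) <> KA.

Definition bblocks (L : layout) : cset :=
  fun x => inU L KB x \/ inU L KBi x \/
           exists i, complementary L i /\ gapS L i x.

Definition realizes (M : msys) (L : layout) : Prop :=
  layout_ok L /\
  seteq (setA M) (inU L KA) /\ seteq (setB M) (inU L KB) /\
  seteq (setBi M) (inU L KBi).

Definition gap_adj (M : msys) (L : layout) (i j : nat) : Prop :=
  principal L i /\ principal L j /\
  (seteq (img (ma M) (gapS L i)) (gapS L j) \/
   seteq (img (mb M) (gapS L i)) (gapS L j) \/
   seteq (img (mb M) (gapS L j)) (gapS L i)).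

Definition markov_conds (M : msys) (L : layout) : Prop :=
  is_circ_homeo (ma M) /\ (forall x, eqc (ma M (ma M x)) x) /\
  is_circ_homeo (mb M) /\ (forall x, eqc (mb M (mb M (mb M x))) x) /\
  (exists x, ~ eqc (mb M x) x) /\
  realizes M L /\
  cnt (lab L) KA (lN L) = cnt (lab L) KB (lN L) /\
  cnt (lab L) KB (lN L) = cnt (lab L) KBi (lN L) /\
  (forall i, (i < lN L)%nat -> lab L i <> lab L (nxt L i)) /\
  seteq (img (ma M) (setA M)) (bblocks L) /\
  seteq (img (mb M) (setA M)) (setB M) /\
  seteq (img (mb M) (setB M)) (setBi M) /\
  (forall i, principal L i ->
     exists j, principal L j /\ seteq (img (ma M) (gapS L i)) (gapS L j)) /\
  (forall i, principal L i ->
     let P := exists j, principal L j /\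
                seteq (img (mb M) (gapS L i)) (gapS L j) in
     (* b^{-1} maps gap i to gap j  iff  b maps gap j to gap i *)
     let Q := exists j, principal L j /\
                seteq (img (mb M) (gapS L j)) (gapS L i) in
     (P /\ ~ Q) \/ (~ P /\ Q)) /\
  (forall i j, principal L i -> principal L j ->
     clos_refl_trans nat (gap_adj M L) i j).

Definition is_markov (M : msys) : Prop :=
  exists L, markov_conds M L.

Definition equivalent (M M' : msys) : Prop :=
  exists h, is_circ_homeo h /\
    seteq (img h (setA M)) (setA M') /\
    seteq (img h (setB M)) (setB M') /\
    seteq (img h (setBi M)) (setBi M').

(* An enumeration I_1, I_1', ..., I_k, I_k' of the principal gaps:
   I_i = gap (g i), I_i' = gap (g' i) (0-based, i < k), and
   b_i = b if e i, b_i = b^{-1} otherwise. *)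
Definition valid_enum (M : msys) (L : layout) (k : nat)
    (g g' : nat -> nat) (e : nat -> bool) : Prop :=
  (forall i, (i < k)%nat -> principal L (g i) /\ principal L (g' i)) /\
  (forall i j, (i < k)%nat -> (j < k)%nat ->
     (g i = g j -> i = j) /\ (g' i = g' j -> i = j) /\ g i <> g' j) /\
  (forall j, principal L j -> exists i, (i < k)%nat /\ (j = g i \/ j = g' i)) /\
  (forall i, (i < k)%nat ->
     (if e i then seteq (img (mb M) (gapS L (g i))) (gapS L (g' i))
      else seteq (img (mb M) (gapS L (g' i))) (gapS L (g i))) /\
     seteq (img (ma M) (gapS L (g' i)))
           (gapS L (g (if Nat.ltb (S i) k then S i else O)))).

(* lift of b_i; b^{-1} = b o b on the circle since b has period three *)
Definition bsel (M : msys) (e : nat -> bool) (i : nat) (x : R) : R :=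
  if e i then mb M x else mb M (mb M x).

(* f_1 = a o b_k o a o b_{k-1} o ... o a o b_1 (composed over i < n) *)
Fixpoint fcomp (M : msys) (e : nat -> bool) (n : nat) (x : R) : R :=
  match n with
  | O => x
  | S n => ma M (bsel M e n (fcomp M e n x))
  end.

Definition prop_star (M : msys) : Prop :=
  forall L, realizes M L ->
  forall k g g' e, valid_enum M L k g g' e ->
  (0 < k)%nat ->
  let f1 := fcomp M e k in
  (~ exists z, gapS L (g O) z /\ eqc (f1 z) z) /\
  (forall z, gapS L (g O) z ->
   forall p, (p = lr L (g O) \/ p = lnext L (g O)) -> setA M p ->
   Un_cv (fun n => cdist (Nat.iter n f1 z) p) 0).

(* Main.v *)
Require Import Defs.
From Stdlib Require Import Reals Relations Lra Lia ZArith ClassicalEpsilon Classical.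
Open Scope R_scope.


Lemma shiftZ (F : R -> R) : (forall x, F (x + 1) = F x + 1) ->
  forall (m : Z) x, F (x + IZR m) = F x + IZR m.
Proof.
  intros H m. induction m using Z.peano_ind; intro x.
  - rewrite !Rplus_0_r; reflexivity.
  - rewrite succ_IZR. replace (x + (IZR m + 1)) with ((x + IZR m) + 1) by ring.
    rewrite H, IHm; ring.
  - unfold Z.pred. rewrite plus_IZR. simpl IZR.
    assert (E2 : F (x + (IZR m + -1) + 1) = F (x + (IZR m + -1)) + 1) by apply H.
    replace (x + (IZR m + -1) + 1) with (x + IZR m) in E2 by ring.
    rewrite (IHm x) in E2. lra.
Qed.

Lemma eqc_refl x : eqc x x.
Proof. exists 0%Z. simpl; ring. Qed.
Lemma eqc_sym x y : eqc x y -> eqc y x.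
Proof. intros [m H]. exists (- m)%Z. rewrite opp_IZR. lra. Qed.
Lemma eqc_trans x y z : eqc x y -> eqc y z -> eqc x z.
Proof. intros [m H] [n H']. exists (m + n)%Z. rewrite plus_IZR. lra. Qed.
Lemma eqc_shift x m : eqc x (x + IZR m).
Proof. exists m. reflexivity. Qed.
Lemma eqc_map F x y : (forall x, F (x + 1) = F x + 1) -> eqc x y -> eqc (F x) (F y).
Proof. intros H [m E]. subst y. exists m. apply shiftZ; auto. Qed.

Lemma IZR_small (m : Z) : -1 < IZR m < 1 -> m = 0%Z.
Proof.
  intros [H1 H2]. apply lt_IZR in H1. apply lt_IZR in H2. lia.
Qed.

Lemma incr_le F : (forall x y, x < y -> F x < F y) -> forall x y, x <= y -> F x <= F y.
Proof. intros H x y [h|h]; [left; auto | subst; lra]. Qed.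
Lemma incr_lt_inv F : (forall x y, x < y -> F x < F y) -> forall x y, F x < F y -> x < y.
Proof.
  intros H x y h. destruct (Rlt_le_dec x y) as [|h2]; auto.
  apply (incr_le F H) in h2. lra.
Qed.
Lemma incr_inj F : (forall x y, x < y -> F x < F y) -> forall x y, F x = F y -> x = y.
Proof.
  intros H x y h. destruct (Rtotal_order x y) as [h2|[h2|h2]]; auto;
  apply H in h2; lra.
Qed.

Lemma lnext_val L i : (i < lN L)%nat ->
  (lnext L i = ll L (S i) /\ nxt L i = S i /\ (S i < lN L)%nat) \/
  (lnext L i = ll L 0 + 1 /\ nxt L i = 0%nat /\ S i = lN L).
Proof.
  intro h. unfold lnext, nxt. destruct (Nat.ltb (S i) (lN L)) eqn:E.
  - apply Nat.ltb_lt in E. left; auto.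
  - apply Nat.ltb_ge in E. right. repeat split; lia.
Qed.

Lemma lay_step L i : layout_ok L -> (S i < lN L)%nat -> lr L i < ll L (S i).
Proof.
  intros [H1 H2] h. pose proof (H2 i ltac:(lia)). destruct (lnext_val L i ltac:(lia))
    as [[E _]|[_ [_ E]]]; [rewrite E in H; auto | lia].
Qed.

Lemma lay_chain L i d : layout_ok L -> (i + S d < lN L)%nat -> lr L i < ll L (i + S d).
Proof.
  intro HL. induction d; intro h.
  - replace (i + 1)%nat with (S i) by lia. apply lay_step; auto; lia.
  - pose proof (IHd ltac:(lia)). destruct HL as [H1 H2].
    pose proof (H1 (i + S d)%nat ltac:(lia)).
    pose proof (lay_step L (i + S d) (conj H1 H2) ltac:(lia)).
    replace (i + S (S d))%nat with (S (i + S d)) by lia. lra.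
Qed.

Lemma lay_lt L i j : layout_ok L -> (i < j)%nat -> (j < lN L)%nat -> lr L i < ll L j.
Proof.
  intros HL h1 h2. replace j with (i + S (j - i - 1))%nat by lia.
  apply lay_chain; auto; lia.
Qed.

Lemma lay_bounds L i : layout_ok L -> (i < lN L)%nat ->
  ll L 0 <= ll L i /\ ll L i < lr L i /\ lr L i < lnext L i /\ lnext L i <= ll L 0 + 1.
Proof.
  intros HL h. pose proof HL as [H1 H2].
  split; [|split; [auto|split; [auto|]]].
  - destruct i; [lra|]. pose proof (lay_lt L 0 (S i) HL ltac:(lia) h). pose proof (H1 0%nat ltac:(lia)). lra.
  - destruct (lnext_val L i h) as [[E [_ h3]]|[E _]]; rewrite E; [|lra].
    assert (HN : (lN L - 1 < lN L)%nat) by lia.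
    pose proof (H2 _ HN). destruct (lnext_val L _ HN) as [[_ [_ h4]]|[E2 _]]; [lia|].
    rewrite E2 in H.
    destruct (Nat.eq_dec (S i) (lN L - 1)) as [e|e].
    + rewrite e. pose proof (H1 _ HN). lra.
    + pose proof (lay_lt L (S i) (lN L - 1) HL ltac:(lia) HN). pose proof (H1 (S i) h3). pose proof (H1 _ HN). lra.
Qed.

Lemma comp_uniq L i j p m : layout_ok L -> (i < lN L)%nat -> (j < lN L)%nat ->
  ll L i <= p <= lr L i -> ll L j <= p + IZR m <= lr L j -> i = j /\ m = 0%Z.
Proof.
  intros HL hi hj h1 h2.
  pose proof (lay_bounds L i HL hi). pose proof (lay_bounds L j HL hj).
  assert (m = 0%Z) by (apply IZR_small; lra). subst m. simpl in h2. rewrite Rplus_0_r in h2.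
  split; auto.
  destruct (Nat.lt_total i j) as [c|[c|c]]; auto.
  - pose proof (lay_lt L i j HL c hj). lra.
  - pose proof (lay_lt L j i HL c hi). lra.
Qed.

Lemma gap_noX L i j x m : layout_ok L -> (i < lN L)%nat -> (j < lN L)%nat ->
  lr L i < x < lnext L i -> ~ (ll L j <= x + IZR m <= lr L j).
Proof.
  intros HL hi hj h1 h2.
  pose proof (lay_bounds L i HL hi). pose proof (lay_bounds L j HL hj).
  destruct (Z.lt_total m 0) as [c|[c|c]].
  - apply IZR_lt in c. assert (IZR m <= -1).
    { apply IZR_le. apply lt_IZR in c. lia. } lra.
  - subst m. simpl in h2. rewrite Rplus_0_r in h2.
    destruct (Nat.le_gt_cases j i) as [c|c].
    + destruct (Nat.eq_dec j i) as [e|e]; [subst; lra|].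
      pose proof (lay_lt L j i HL ltac:(lia) hi). lra.
    + destruct (lnext_val L i hi) as [[E [_ h3]]|[E [_ h3]]]; [|lia].
      rewrite E in h1.
      destruct (Nat.eq_dec j (S i)) as [e|e]; [subst; lra|].
      pose proof (lay_lt L (S i) j HL ltac:(lia) hj). pose proof (lay_bounds L (S i) HL h3). lra.
  - assert (IZR m >= 1). { apply Rle_ge, IZR_le. lia. } lra.
Qed.


Definition kset (M : msys) (K : kind) : cset :=
  match K with KA => setA M | KB => setB M | KBi => setBi M end.
Definition Xs (M : msys) (x : R) : Prop := setA M x \/ setB M x \/ setBi M x.

Lemma Xs_kset M x : Xs M x <-> exists K, kset M K x.
Proof.
  split.
  - intros [h|[h|h]]; [exists KA|exists KB|exists KBi]; exact h.
  - intros [[] h]; unfold Xs; simpl in h; tauto.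
Qed.


Lemma kset_inU M L K x : realizes M L -> (kset M K x <-> inU L K x).
Proof. intros (_ & HA & HB & HBi). destruct K; simpl; [apply HA|apply HB|apply HBi]. Qed.

Lemma inU_shift L K x m : inU L K (x + IZR m) <-> inU L K x.
Proof.
  split; intros (i & hi & hl & n & h); exists i; split; auto; split; auto.
  - exists (m + n)%Z. rewrite plus_IZR. lra.
  - exists (n - m)%Z. rewrite minus_IZR. lra.
Qed.

Lemma kset_shift M L K x m : realizes M L -> (kset M K (x + IZR m) <-> kset M K x).
Proof.
  intro HR. rewrite !(kset_inU M L K _ HR). apply inU_shift.
Qed.

Lemma Xs_shift M L x m : realizes M L -> (Xs M (x + IZR m) <-> Xs M x).
Proof.
  intro HR. rewrite !Xs_kset. split; intros [K h]; exists K;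
  [apply (kset_shift M L K x m HR)|apply (kset_shift M L K x m HR)]; auto.
Qed.

Lemma kset_comp M L i p m : realizes M L -> (i < lN L)%nat ->
  ll L i <= p <= lr L i -> kset M (lab L i) (p + IZR m).
Proof.
  intros HR hi hp. apply (kset_inU M L _ _ HR).
  exists i. split; auto. split; auto. exists (- m)%Z. rewrite opp_IZR. lra.
Qed.

Lemma kset_lab M L i p m K : realizes M L -> (i < lN L)%nat ->
  ll L i <= p <= lr L i -> kset M K (p + IZR m) -> lab L i = K.
Proof.
  intros HR hi hp h. apply (kset_inU M L _ _ HR) in h.
  destruct h as (j & hj & hl & n & hn).
  destruct (comp_uniq L i j p (m + n) (proj1 HR) hi hj hp) as [e _].
  { rewrite plus_IZR. lra. }
  subst; auto.
Qed.

Lemma kset_uniq M L K K' x : realizes M L -> kset M K x -> kset M K' x -> K = K'.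
Proof.
  intros HR h h'. pose proof h as h0.
  apply (kset_inU M L _ _ HR) in h0. destruct h0 as (j & hj & hl & n & hn).
  rewrite <- hl. apply (kset_lab M L j (x + IZR n) (- n) K' HR hj hn).
  rewrite opp_IZR. replace (x + IZR n + - IZR n) with x by ring. auto.
Qed.

Lemma Xs_comp M L x : realizes M L ->
  (Xs M x <-> exists j m, (j < lN L)%nat /\ ll L j <= x + IZR m <= lr L j).
Proof.
  intro HR. rewrite Xs_kset. split.
  - intros [K h]. apply (kset_inU M L _ _ HR) in h. destruct h as (j & hj & _ & n & hn).
    exists j, n; auto.
  - intros (j & m & hj & h). exists (lab L j).
    pose proof (kset_comp M L j (x + IZR m) (- m) HR hj h) as H.
    rewrite opp_IZR in H. replace (x + IZR m + - IZR m) with x in H by ring. auto.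
Qed.

Definition GI (M : msys) (l r : R) : Prop :=
  l < r /\ Xs M l /\ Xs M r /\ (forall y, l < y < r -> ~ Xs M y).
Definition PGI (M : msys) (l r : R) : Prop := GI M l r /\ (setA M l \/ setA M r).
Definition inI (P : R -> R -> Prop) (x l r : R) : Prop := P l r /\ l < x < r.
Definition Uniq (P : R -> R -> Prop) : Prop :=
  forall x l r l' r', inI P x l r -> inI P x l' r' -> l = l' /\ r = r'.

Lemma GI_uniq M : Uniq (GI M).
Proof.
  intros x l r l' r' [(h1 & h2 & h3 & h4) h5] [(g1 & g2 & g3 & g4) g5].
  split.
  - destruct (Rtotal_order l l') as [c|[c|c]]; auto.
    + exfalso; apply (h4 l'); auto; lra.
    + exfalso; apply (g4 l); auto; lra.
  - destruct (Rtotal_order r r') as [c|[c|c]]; auto.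
    + exfalso; apply (g4 r); auto; lra.
    + exfalso; apply (h4 r'); auto; lra.
Qed.

Lemma PGI_uniq M : Uniq (PGI M).
Proof.
  intros x l r l' r' [[h _] h'] [[g _] g']. apply (GI_uniq M x); split; auto.
Qed.

Lemma GI_shift M L l r m : realizes M L -> GI M l r -> GI M (l + IZR m) (r + IZR m).
Proof.
  intros HR (h1 & h2 & h3 & h4). split; [lra|]. split; [apply (Xs_shift M L _ _ HR); auto|].
  split; [apply (Xs_shift M L _ _ HR); auto|].
  intros y hy hX. apply (h4 (y + IZR (- m))).
  - rewrite opp_IZR; lra.
  - apply (Xs_shift M L _ _ HR); auto.
Qed.

Lemma PGI_shift M L l r m : realizes M L -> PGI M l r -> PGI M (l + IZR m) (r + IZR m).
Proof.
  intros HR [h1 h2]. split; [apply (GI_shift M L); auto|].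
  destruct h2 as [h|h]; [left|right]; apply (kset_shift M L KA _ m HR); auto.
Qed.

Lemma GI_len M L l r : realizes M L -> GI M l r -> r <= l + 1.
Proof.
  intros HR (h1 & h2 & h3 & h4). destruct (Rle_dec r (l + 1)) as [|c]; auto.
  exfalso. apply (h4 (l + IZR 1)). { simpl; lra. }
  apply (Xs_shift M L _ _ HR); auto.
Qed.

Lemma GI_noX M l r x : GI M l r -> l < x < r -> ~ Xs M x.
Proof. intros (_ & _ & _ & h) hx. apply h; auto. Qed.

Lemma Xs_lnext M L i : realizes M L -> (i < lN L)%nat ->
  kset M (lab L (nxt L i)) (lnext L i) /\ (nxt L i < lN L)%nat.
Proof.
  intros HR hi. pose proof (proj1 (proj1 HR) 0%nat) as H0.
  destruct (lnext_val L i hi) as [[E [E2 h3]]|[E [E2 h3]]]; rewrite E, E2.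
  - split; auto. pose proof (kset_comp M L (S i) (ll L (S i)) 0 HR h3) as H.
    simpl in H. rewrite Rplus_0_r in H. apply H. pose proof (proj1 (proj1 HR) (S i) h3). lra.
  - split; [|lia]. apply (kset_comp M L 0 (ll L 0) 1 HR). lia.
    pose proof (H0 ltac:(lia)). lra.
Qed.

Lemma gapS_GI M L i m : realizes M L -> (i < lN L)%nat ->
  GI M (lr L i + IZR m) (lnext L i + IZR m).
Proof.
  intros HR hi. apply (GI_shift M L _ _ m HR).
  pose proof (lay_bounds L i (proj1 HR) hi).
  split; [lra|]. split.
  { apply Xs_kset. exists (lab L i). pose proof (kset_comp M L i (lr L i) 0 HR hi) as H'.
    simpl in H'. rewrite Rplus_0_r in H'. apply H'. lra. }
  split.
  { apply Xs_kset. exists (lab L (nxt L i)). apply (Xs_lnext M L i HR hi). }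
  intros y hy hX. apply (Xs_comp M L y HR) in hX. destruct hX as (j & n & hj & hn).
  apply (gap_noX L i j y n (proj1 HR) hi hj hy hn).
Qed.

Lemma gapS_in L i x : gapS L i x -> exists m, lr L i + IZR m < x < lnext L i + IZR m.
Proof. intros [m h]. exists (- m)%Z. rewrite opp_IZR. lra. Qed.

Lemma in_gapS L i x m : lr L i + IZR m < x < lnext L i + IZR m -> gapS L i x.
Proof. intros h. exists (- m)%Z. rewrite opp_IZR. lra. Qed.

Lemma gapS_shift L i x m : gapS L i (x + IZR m) <-> gapS L i x.
Proof.
  split; intros [n h].
  - exists (m + n)%Z. rewrite plus_IZR. lra.
  - exists (n - m)%Z. rewrite minus_IZR. lra.
Qed.

Lemma GI_gapS M L l r : realizes M L -> GI M l r ->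
  exists i m, (i < lN L)%nat /\ l = lr L i + IZR m /\ r = lnext L i + IZR m.
Proof.
  intros HR HG. pose proof HG as (h1 & h2 & h3 & h4).
  apply (Xs_comp M L l HR) in h2. destruct h2 as (j & m0 & hj & hm).
  pose proof (lay_bounds L j (proj1 HR) hj) as Hb.
  assert (El : l + IZR m0 = lr L j).
  { destruct (Req_dec (l + IZR m0) (lr L j)) as [e|e]; auto. exfalso.
    set (d := Rmin (lr L j - (l + IZR m0)) (r - l) / 2).
    assert (0 < d /\ d < lr L j - (l + IZR m0) /\ d < r - l).
    { unfold d. pose proof (Rmin_l (lr L j - (l + IZR m0)) (r - l)).
      pose proof (Rmin_r (lr L j - (l + IZR m0)) (r - l)).
      assert (0 < Rmin (lr L j - (l + IZR m0)) (r - l)).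
      { apply Rmin_glb_lt; lra. } lra. }
    apply (h4 (l + d)); [lra|]. apply (Xs_comp M L _ HR). exists j, m0. split; auto. lra. }
  exists j, (- m0)%Z. split; auto. rewrite opp_IZR. split; [lra|].
  pose proof (Xs_lnext M L j HR hj) as [HX hn].
  assert (HX' : Xs M (lnext L j - IZR m0)).
  { apply Xs_kset. exists (lab L (nxt L j)).
    replace (lnext L j - IZR m0) with (lnext L j + IZR (- m0)) by (rewrite opp_IZR; ring).
    apply (kset_shift M L _ _ _ HR); auto. }
  destruct (Rtotal_order (lnext L j - IZR m0) r) as [c|[c|c]].
  - exfalso. apply (h4 (lnext L j - IZR m0)); [lra|exact HX'].
  - lra.
  - exfalso. apply (Xs_comp M L r HR) in h3. destruct h3 as (j' & n & hj' & hn').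
    apply (gap_noX L j j' (r + IZR m0) (n - m0) (proj1 HR) hj hj'); [lra|].
    rewrite minus_IZR. replace (r + IZR m0 + (IZR n - IZR m0)) with (r + IZR n) by ring. auto.
Qed.

Lemma GI_types M L l r : realizes M L ->
  (forall i, (i < lN L)%nat -> lab L i <> lab L (nxt L i)) -> GI M l r ->
  exists Kl Kr, Kl <> Kr /\ kset M Kl l /\ kset M Kr r.
Proof.
  intros HR HB HG. destruct (GI_gapS M L l r HR HG) as (i & m & hi & El & Er).
  exists (lab L i), (lab L (nxt L i)). split; [apply HB; auto|]. split.
  - subst l. apply (kset_comp M L i); auto. pose proof (lay_bounds L i (proj1 HR) hi). lra.
  - subst r. apply (kset_shift M L _ _ _ HR). apply (Xs_lnext M L i HR hi).
Qed.

Lemma principal_PGI M L i m : realizes M L -> principal L i ->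
  PGI M (lr L i + IZR m) (lnext L i + IZR m).
Proof.
  intros HR [hi hp]. split; [apply gapS_GI; auto|].
  destruct hp as [h|h]; [left|right].
  - change (kset M KA (lr L i + IZR m)). rewrite <- h. apply (kset_comp M L i); auto.
    pose proof (lay_bounds L i (proj1 HR) hi). lra.
  - change (kset M KA (lnext L i + IZR m)). rewrite <- h.
    apply (kset_shift M L _ _ _ HR). apply (Xs_lnext M L i HR hi).
Qed.

Lemma PGI_principal M L i m : realizes M L -> (i < lN L)%nat ->
  PGI M (lr L i + IZR m) (lnext L i + IZR m) -> principal L i.
Proof.
  intros HR hi [_ h]. split; auto. destruct h as [h|h]; [left|right].
  - apply (kset_lab M L i (lr L i) m KA HR hi); auto.
    pose proof (lay_bounds L i (proj1 HR) hi). lra.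
  - assert (h2 : kset M KA (lnext L i)) by (apply (kset_shift M L KA _ m HR); exact h).
    pose proof (Xs_lnext M L i HR hi) as [h' _].
    apply (kset_uniq M L _ _ _ HR h' h2).
Qed.


Definition twist (f : R -> R) (P : R -> R -> Prop) (rho : R -> R -> R -> R) (x : R) : R :=
  match excluded_middle_informative (exists p : R * R, inI P x (fst p) (snd p)) with
  | left H => let p := proj1_sig (constructive_indefinite_description _ H) in
      f (fst p) + (f (snd p) - f (fst p)) * rho (fst p) (snd p) ((x - fst p) / (snd p - fst p))
  | right _ => f x
  end.

Lemma twist_in f P rho x l r : Uniq P -> inI P x l r ->
  twist f P rho x = f l + (f r - f l) * rho l r ((x - l) / (r - l)).
Proof.
  intros U h. unfold twist. destruct excluded_middle_informative as [H|H].
  - destruct (constructive_indefinite_description _ H) as [[l' r'] h']; simpl in *.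
    destruct (U x l r l' r' h h'); subst; reflexivity.
  - exfalso; apply H; exists (l, r); exact h.
Qed.

Lemma twist_out f P rho x : ~ (exists l r, inI P x l r) -> twist f P rho x = f x.
Proof.
  intros h. unfold twist. destruct excluded_middle_informative as [H|H]; auto.
  exfalso. destruct H as [[l r] H]. apply h. exists l, r; exact H.
Qed.

Lemma inI_disj P x y l r l' r' : Uniq P -> inI P x l r -> inI P y l' r' -> x < y ->
  (l = l' /\ r = r') \/ r <= l'.
Proof.
  intros U h h' hxy. destruct (Rle_dec r l') as [c|c]; [right; auto|left].
  destruct h as [hP hx], h' as [hP' hy].
  assert (exists z, l < z < r /\ l' < z < r') as [z hz].
  { destruct (Rle_dec l l') as [c1|c1]; destruct (Rle_dec r r') as [c2|c2].
    - exists ((l' + r) / 2). lra.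
    - exists ((l' + r') / 2). lra.
    - exists ((l + r) / 2). lra.
    - exists ((l + r') / 2). lra. }
  apply (U z); split; auto; lra.
Qed.


Lemma frac_in l r x : l < x < r -> 0 < (x - l) / (r - l) < 1.
Proof.
  intros h. split.
  - apply Rdiv_lt_0_compat; lra.
  - apply (Rmult_lt_reg_r (r - l)); [lra|]. unfold Rdiv. rewrite Rmult_assoc, Rinv_l; lra.
Qed.

Lemma frac_mono l r x y : l < r -> x < y -> (x - l) / (r - l) < (y - l) / (r - l).
Proof.
  intros h1 h2. unfold Rdiv. apply Rmult_lt_compat_r; [apply Rinv_0_lt_compat; lra|lra].
Qed.

Lemma twist_range f P rho x l r :
  (forall x y, x < y -> f x < f y) -> Uniq P ->
  (forall l r s, P l r -> 0 < s < 1 -> 0 < rho l r s < 1) ->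
  inI P x l r -> f l < twist f P rho x < f r.
Proof.
  intros Hf U Hr h. rewrite (twist_in f P rho x l r U h).
  destruct h as [hP hx]. pose proof (Hr l r _ hP (frac_in l r x hx)).
  assert (f l < f r) by (apply Hf; lra).
  split; [|]; nra.
Qed.

Lemma twist_mono f P rho :
  (forall x y, x < y -> f x < f y) -> Uniq P ->
  (forall l r s, P l r -> 0 < s < 1 -> 0 < rho l r s < 1) ->
  (forall l r s t, P l r -> 0 < s -> s < t -> t < 1 -> rho l r s < rho l r t) ->
  forall x y, x < y -> twist f P rho x < twist f P rho y.
Proof.
  intros Hf U Hr Hm x y hxy.
  destruct (classic (exists l r, inI P x l r)) as [[l [r hx]]|nx];
  destruct (classic (exists l r, inI P y l r)) as [[l' [r' hy]]|ny].
  - destruct (inI_disj P x y l r l' r' U hx hy hxy) as [[e1 e2]|c].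
    + subst l' r'. rewrite (twist_in f P rho x l r U hx), (twist_in f P rho y l r U hy).
      destruct hx as [hP hx], hy as [_ hy].
      pose proof (Hm l r _ _ hP (proj1 (frac_in l r x hx)) (frac_mono l r x y ltac:(lra) hxy)
        (proj2 (frac_in l r y hy))).
      assert (f l < f r) by (apply Hf; lra). nra.
    + pose proof (twist_range f P rho x l r Hf U Hr hx).
      pose proof (twist_range f P rho y l' r' Hf U Hr hy).
      pose proof (incr_le f Hf r l' c). lra.
  - rewrite (twist_out f P rho y ny).
    pose proof (twist_range f P rho x l r Hf U Hr hx).
    assert (r <= y).
    { destruct (Rle_dec r y) as [|c]; auto. exfalso. apply ny. exists l, r.
      destruct hx as [hP hx]. split; auto; lra. }
    pose proof (incr_le f Hf r y H0). lra.
  - rewrite (twist_out f P rho x nx).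
    pose proof (twist_range f P rho y l' r' Hf U Hr hy).
    assert (x <= l').
    { destruct (Rle_dec x l') as [|c]; auto. exfalso. apply nx. exists l', r'.
      destruct hy as [hP hy]. split; auto; lra. }
    pose proof (incr_le f Hf x l' H0). lra.
  - rewrite (twist_out f P rho x nx), (twist_out f P rho y ny). auto.
Qed.

Lemma twist_per f P rho :
  (forall x, f (x + 1) = f x + 1) -> Uniq P ->
  (forall l r, P l r -> P (l + 1) (r + 1)) ->
  (forall l r, P l r -> P (l - 1) (r - 1)) ->
  (forall l r s, P l r -> rho (l + 1) (r + 1) s = rho l r s) ->
  forall x, twist f P rho (x + 1) = twist f P rho x + 1.
Proof.
  intros Hf U H1 H2 H3 x.
  destruct (classic (exists l r, inI P x l r)) as [[l [r hx]]|nx].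
  - assert (hx' : inI P (x + 1) (l + 1) (r + 1)).
    { destruct hx as [hP h]. split; auto; lra. }
    rewrite (twist_in f P rho _ _ _ U hx'), (twist_in f P rho _ _ _ U hx).
    rewrite !Hf, H3 by (apply hx).
    replace ((x + 1 - (l + 1)) / (r + 1 - (l + 1))) with ((x - l) / (r - l)) by (f_equal; ring).
    ring.
  - assert (nx' : ~ (exists l r, inI P (x + 1) l r)).
    { intros [l [r [hP h]]]. apply nx. exists (l - 1), (r - 1). split; auto; lra. }
    rewrite (twist_out f P rho _ nx), (twist_out f P rho _ nx'). auto.
Qed.

Lemma cont_mono_surj g : (forall x y, x < y -> g x < g y) -> (forall y, exists x, g x = y) ->
  continuity g.
Proof.
  intros Hm Hs x. unfold continuity_pt, continue_in, limit1_in, limit_in.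
  intros eps heps. destruct (Hs (g x - eps)) as [u hu]. destruct (Hs (g x + eps)) as [v hv].
  assert (u < x) by (apply (incr_lt_inv g Hm); lra).
  assert (x < v) by (apply (incr_lt_inv g Hm); lra).
  exists (Rmin (x - u) (v - x)). split.
  { apply Rlt_gt, Rmin_glb_lt; lra. }
  intros y [_ hy]. simpl in *. unfold R_dist in *.
  pose proof (Rmin_l (x - u) (v - x)). pose proof (Rmin_r (x - u) (v - x)).
  apply Rabs_def2 in hy. destruct hy.
  assert (g u < g y) by (apply Hm; lra). assert (g y < g v) by (apply Hm; lra).
  apply Rabs_def1; lra.
Qed.

Lemma surj_interval f : continuity f -> (forall x y, x < y -> f x < f y) ->
  forall l r y, l < r -> f l < y < f r -> exists x, l < x < r /\ f x = y.
Proof.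
  intros Hc Hm l r y hlr hy.
  assert (Hc' : continuity (fun t => f t - y)).
  { apply continuity_minus; auto. apply continuity_const. intros a b; auto. }
  destruct (IVT (fun t => f t - y) l r Hc' hlr ltac:(lra) ltac:(lra)) as [z [hz e]].
  exists z. assert (f z = y) by lra. split; auto.
  split; destruct (Req_dec z l); destruct (Req_dec z r); subst; lra.
Qed.


Definition BH (M : msys) (L : layout) : Prop :=
  realizes M L /\ is_circ_homeo (mb M) /\ (forall x, eqc (mb M (mb M (mb M x))) x) /\
  seteq (img (mb M) (setA M)) (setB M) /\ seteq (img (mb M) (setB M)) (setBi M) /\
  (forall i, (i < lN L)%nat -> lab L i <> lab L (nxt L i)).

Definition bk (K : kind) : kind := match K with KA => KB | KB => KBi | KBi => KA end.

Lemma homeo_shift F : is_circ_homeo F -> forall m x, F (x + IZR m) = F x + IZR m.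
Proof. intros (_ & _ & H). apply shiftZ; auto. Qed.

Lemma img_self F S x : S x -> img F S (F x).
Proof. intros h. exists x. split; auto. apply eqc_refl. Qed.

Lemma eqc_kset M L K x y : realizes M L -> eqc x y -> kset M K x -> kset M K y.
Proof. intros HR [m e] h. subst y. apply (kset_shift M L K x m HR). auto. Qed.

Lemma bk_kset M L K p : BH M L -> kset M K p -> kset M (bk K) (mb M p).
Proof.
  intros (HR & Hb & H3 & HD1 & HD2 & _) h. destruct K; simpl in *.
  - apply HD1. apply img_self; auto.
  - apply HD2. apply img_self; auto.
  - apply HD2 in h. destruct h as (x & hx & ex).
    apply HD1 in hx. destruct hx as (w & hw & ew).
    pose proof (proj2 (proj2 Hb)) as Hp.
    assert (eqc w (mb M p)).
    { apply eqc_trans with (mb M (mb M (mb M w))); [apply eqc_sym, H3|].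
      apply eqc_trans with (mb M (mb M x)).
      - apply eqc_map; [apply Hp|]. apply eqc_map; [apply Hp|]. exact ew.
      - apply eqc_map; [apply Hp|]. exact ex. }
    apply (eqc_kset M L KA w); auto.
Qed.

Lemma Xs_pre_b M L y : BH M L -> Xs M y -> exists x, Xs M x /\ mb M x = y.
Proof.
  intros HH hy. pose proof HH as (HR & Hb & H3 & HD1 & HD2 & _).
  assert (G : forall S x, (forall m z, S z -> S (z + IZR m)) -> S x -> eqc (mb M x) y -> Xs M x ->
     (forall m z, Xs M z -> Xs M (z + IZR m)) -> exists x, Xs M x /\ mb M x = y).
  { intros S x HS hx [m e] hX HX. exists (x + IZR m). split; auto.
    rewrite (homeo_shift _ Hb). auto. }
  assert (HX : forall m z, Xs M z -> Xs M (z + IZR m)) by (intros; apply (Xs_shift M L _ _ HR); auto).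
  destruct hy as [h|[h|h]].
  - pose proof (bk_kset M L KA y HH h) as h1. pose proof (bk_kset M L KB _ HH h1) as h2.
    simpl in h2. destruct (H3 y) as [m e]. exists (mb M (mb M y) + IZR m).
    split; [apply HX; right; right; auto|]. rewrite (homeo_shift _ Hb). auto.
  - apply HD1 in h. destruct h as (x & hx & ex).
    apply (G (setA M) x); auto.
    + intros m z hz. apply (kset_shift M L KA z m HR); auto.
    + left; auto.
  - apply HD2 in h. destruct h as (x & hx & ex).
    apply (G (setB M) x); auto.
    + intros m z hz. apply (kset_shift M L KB z m HR); auto.
    + right; left; auto.
Qed.

Lemma Xs_b M L x : BH M L -> Xs M x -> Xs M (mb M x).
Proof.
  intros HH hx. apply Xs_kset in hx. destruct hx as [K h]. apply Xs_kset.
  exists (bk K). apply (bk_kset M L); auto.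
Qed.

Lemma GI_b M L l r : BH M L -> GI M l r -> GI M (mb M l) (mb M r).
Proof.
  intros HH (h1 & h2 & h3 & h4). pose proof HH as (HR & Hb & _).
  destruct Hb as (_ & Hi & _).
  split; [apply Hi; auto|]. split; [apply (Xs_b M L); auto|]. split; [apply (Xs_b M L); auto|].
  intros y hy hX. destruct (Xs_pre_b M L y HH hX) as (x & hx & e). subst y.
  apply (h4 x); auto. split; apply (incr_lt_inv _ Hi); lra.
Qed.

Lemma GI_same_left M l r r' : GI M l r -> GI M l r' -> r = r'.
Proof.
  intros h h'. pose proof (proj1 h). pose proof (proj1 h').
  destruct (GI_uniq M (l + Rmin (r - l) (r' - l) / 2) l r l r') as [_ e]; auto.
  - split; auto. pose proof (Rmin_l (r - l) (r' - l)). assert (0 < Rmin (r - l) (r' - l)) by (apply Rmin_glb_lt; lra). lra.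
  - split; auto. pose proof (Rmin_r (r - l) (r' - l)). assert (0 < Rmin (r - l) (r' - l)) by (apply Rmin_glb_lt; lra). lra.
Qed.

Lemma b3_gap M L l r : BH M L -> GI M l r ->
  exists m, mb M (mb M (mb M l)) = l + IZR m /\ mb M (mb M (mb M r)) = r + IZR m.
Proof.
  intros HH HG. pose proof HH as (HR & Hb & H3 & _).
  destruct (H3 l) as [m e]. exists (- m)%Z. rewrite opp_IZR. split; [lra|].
  assert (G3 : GI M (mb M (mb M (mb M l))) (mb M (mb M (mb M r)))) by
    (apply (GI_b M L _ _ HH), (GI_b M L _ _ HH), (GI_b M L _ _ HH); auto).
  assert (G' : GI M (mb M (mb M (mb M l))) (r + IZR (- m))).
  { replace (mb M (mb M (mb M l))) with (l + IZR (- m)) by (rewrite opp_IZR; lra).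
    apply (GI_shift M L); auto. }
  pose proof (GI_same_left M _ _ _ G3 G'). rewrite H, opp_IZR. ring.
Qed.

Lemma GI_pre_b M L y l r : BH M L -> inI (GI M) (mb M y) l r -> exists l' r', inI (GI M) y l' r'.
Proof.
  intros HH [hG hy]. pose proof HH as (HR & Hb & H3 & _). pose proof Hb as (_ & Hi & _).
  pose proof (GI_b M L _ _ HH (GI_b M L _ _ HH hG)) as G2.
  destruct (H3 y) as [m e].
  exists (mb M (mb M l) + IZR m), (mb M (mb M r) + IZR m). split.
  - apply (GI_shift M L); auto.
  - rewrite e. assert (mb M (mb M l) < mb M (mb M (mb M y)) < mb M (mb M r)).
    { split; apply Hi; apply Hi; lra. } lra.
Qed.


Definition AH (M : msys) (L : layout) : Prop :=
  realizes M L /\ is_circ_homeo (ma M) /\ (forall x, eqc (ma M (ma M x)) x) /\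
  seteq (img (ma M) (setA M)) (bblocks L) /\
  (forall i, principal L i ->
     exists j, principal L j /\ seteq (img (ma M) (gapS L i)) (gapS L j)) /\
  (forall i, (i < lN L)%nat -> lab L i <> lab L (nxt L i)).

Lemma Z_cases (u : Z) : u = 0%Z \/ 1 <= IZR u \/ IZR u <= -1.
Proof.
  destruct (Z.lt_total u 0) as [c|[c|c]]; [right; right|left; auto|right; left].
  - apply IZR_le. lia.
  - apply IZR_le. lia.
Qed.

Lemma img_gap M L f i j m : realizes M L -> is_circ_homeo f ->
  (i < lN L)%nat -> (j < lN L)%nat -> seteq (img f (gapS L i)) (gapS L j) ->
  exists m', f (lr L i + IZR m) = lr L j + IZR m' /\ f (lnext L i + IZR m) = lnext L j + IZR m'.
Proof.
  intros HR Hf hi hj HS. pose proof Hf as (Hc & Hi & Hp).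
  set (l := lr L i + IZR m). set (r := lnext L i + IZR m).
  pose proof (gapS_GI M L i m HR hi) as Gi. fold l r in Gi.
  assert (hlr : l < r) by apply Gi.
  assert (hf : f l < f r) by (apply Hi; auto).
  assert (Hin : forall x, l < x < r -> gapS L j (f x)).
  { intros x hx. apply HS. apply img_self. apply (in_gapS L i x m). unfold l, r in hx. lra. }
  destruct (surj_interval f Hc Hi l r ((f l + f r) / 2) hlr ltac:(lra)) as (x0 & hx0 & e0).
  pose proof (Hin x0 hx0) as hz0. rewrite e0 in hz0. destruct (gapS_in L j _ hz0) as [m' hm'].
  exists m'.
  set (l2 := lr L j + IZR m') in *. set (r2 := lnext L j + IZR m') in *.
  pose proof (gapS_GI M L j m' HR hj) as Gj. fold l2 r2 in Gj.
  pose proof (GI_len M L _ _ HR Gj) as hlen.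
  assert (NX : forall y, gapS L j y -> ~ Xs M y).
  { intros y hy. destruct (gapS_in L j y hy) as [n hn].
    apply (GI_noX M (lr L j + IZR n) (lnext L j + IZR n)); auto. apply gapS_GI; auto. }
  assert (X2l : Xs M l2) by apply Gj. assert (X2r : Xs M r2) by apply Gj.
  assert (A : l2 <= f l).
  { destruct (Rle_dec l2 (f l)) as [|c]; auto. exfalso.
    destruct (surj_interval f Hc Hi l x0 l2 ltac:(lra) ltac:(lra)) as (x & hx & ex).
    apply (NX l2); auto. rewrite <- ex. apply Hin. lra. }
  assert (B : f r <= r2).
  { destruct (Rle_dec (f r) r2) as [|c]; auto. exfalso.
    destruct (surj_interval f Hc Hi x0 r r2 ltac:(lra) ltac:(lra)) as (x & hx & ex).
    apply (NX r2); auto. rewrite <- ex. apply Hin. lra. }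
  assert (Sh : forall y, l2 < y < r2 -> exists u : Z, f l + IZR u < y < f r + IZR u).
  { intros y hy. assert (gapS L j y) by (apply (in_gapS L j y m'); auto).
    apply HS in H. destruct H as (x & hx & [t et]). destruct (gapS_in L i x hx) as [n hn].
    exists (n - m + t)%Z. rewrite et, !plus_IZR, minus_IZR.
    assert (f (lr L i + IZR n) < f x < f (lnext L i + IZR n)) by (split; apply Hi; lra).
    replace (lr L i + IZR n) with (l + IZR (n - m)) in H by (unfold l; rewrite minus_IZR; ring).
    replace (lnext L i + IZR n) with (r + IZR (n - m)) in H by (unfold r; rewrite minus_IZR; ring).
    rewrite !(shiftZ f Hp) in H. rewrite minus_IZR in H. lra. }
  assert (C : f l <= l2).
  { destruct (Rle_dec (f l) l2) as [|c]; auto. exfalso.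
    destruct (Sh ((l2 + f l) / 2) ltac:(lra)) as [u hu].
    destruct (Z_cases u) as [e|[e|e]]; [subst u; simpl in hu|..]; lra. }
  assert (D : r2 <= f r).
  { destruct (Rle_dec r2 (f r)) as [|c]; auto. exfalso.
    destruct (Sh ((r2 + f r) / 2) ltac:(lra)) as [u hu].
    destruct (Z_cases u) as [e|[e|e]]; [subst u; simpl in hu|..]; lra. }
  split; lra.
Qed.

Lemma PGI_a_ex M L l r : AH M L -> PGI M l r ->
  exists j m, principal L j /\ ma M l = lr L j + IZR m /\ ma M r = lnext L j + IZR m.
Proof.
  intros (HR & Ha & H2 & HC & HE & HB) HP.
  destruct (GI_gapS M L l r HR (proj1 HP)) as (i & m & hi & El & Er).
  assert (Pi : principal L i) by (apply (PGI_principal M L i m HR hi); subst; auto).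
  destruct (HE i Pi) as (j & Pj & HS).
  destruct (img_gap M L (ma M) i j m HR Ha hi (proj1 Pj) HS) as (m' & e1 & e2).
  exists j, m'. subst; auto.
Qed.

Lemma PGI_a M L l r : AH M L -> PGI M l r -> PGI M (ma M l) (ma M r).
Proof.
  intros HH HP. destruct (PGI_a_ex M L l r HH HP) as (j & m & Pj & e1 & e2).
  rewrite e1, e2. apply principal_PGI; auto. apply HH.
Qed.

Lemma bblocks_notA M L x : realizes M L -> bblocks L x -> ~ setA M x.
Proof.
  intros HR h hA. destruct h as [h|[h|h]].
  - apply (kset_inU M L KB x HR) in h. pose proof (kset_uniq M L KA KB x HR hA h). discriminate.
  - apply (kset_inU M L KBi x HR) in h. pose proof (kset_uniq M L KA KBi x HR hA h). discriminate.
  - destruct h as (i & [hi _] & hg). destruct (gapS_in L i x hg) as [n hn].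
    apply (GI_noX M (lr L i + IZR n) (lnext L i + IZR n) x); auto.
    + apply gapS_GI; auto.
    + left; auto.
Qed.

Lemma A_swap M L l r : AH M L -> PGI M l r -> (setA M (ma M l) <-> ~ setA M l).
Proof.
  intros HH HP. pose proof HH as (HR & Ha & H2 & HC & HE & HB).
  assert (G : forall x, setA M x -> ~ setA M (ma M x)).
  { intros x hx. apply (bblocks_notA M L); auto. apply HC. apply img_self; auto. }
  split.
  - intros h hl. apply (G l hl h).
  - intros hl. pose proof (PGI_a M L l r HH HP) as [_ [h|h]]; auto.
    destruct HP as [_ [h'|h']]; [tauto|]. exfalso; apply (G r h' h).
Qed.

Lemma a2_gap M L l r : AH M L -> PGI M l r ->
  exists m, ma M (ma M l) = l + IZR m /\ ma M (ma M r) = r + IZR m.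
Proof.
  intros HH HP. pose proof HH as (HR & Ha & H2 & _).
  destruct (H2 l) as [m e]. exists (- m)%Z. rewrite opp_IZR. split; [lra|].
  assert (G2 : GI M (ma M (ma M l)) (ma M (ma M r))) by
    (apply (PGI_a M L _ _ HH), (PGI_a M L _ _ HH); auto).
  assert (G' : GI M (ma M (ma M l)) (r + IZR (- m))).
  { replace (ma M (ma M l)) with (l + IZR (- m)) by (rewrite opp_IZR; lra).
    apply (GI_shift M L); auto. apply HP. }
  pose proof (GI_same_left M _ _ _ G2 G'). rewrite H, opp_IZR. ring.
Qed.

Lemma PGI_pre_a M L y l r : AH M L -> inI (PGI M) (ma M y) l r -> exists l' r', inI (PGI M) y l' r'.
Proof.
  intros HH [hG hy]. pose proof HH as (HR & Ha & H2 & _). pose proof Ha as (_ & Hi & _).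
  pose proof (PGI_a M L _ _ HH hG) as G2.
  destruct (H2 y) as [m e].
  exists (ma M l + IZR m), (ma M r + IZR m). split.
  - apply (PGI_shift M L); auto.
  - rewrite e. assert (ma M l < ma M (ma M y) < ma M r).
    { split; apply Hi; lra. } lra.
Qed.


Definition cif (P : Prop) (u v : R) : R :=
  if excluded_middle_informative P then u else v.
Definition rhob (M : msys) (l r s : R) : R :=
  cif (setBi M r) (s * s) (cif (setBi M l) (sqrt s) s).
Definition rho_of (Kl Kr : kind) (s : R) : R :=
  match Kr with KBi => s * s | _ => match Kl with KBi => sqrt s | _ => s end end.
Definition bmod (M : msys) : R -> R := twist (mb M) (GI M) (rhob M).
Definition amod (M : msys) : R -> R := twist (ma M) (PGI M) (fun _ _ s => s).

Lemma cif_T (P : Prop) u v : P -> cif P u v = u.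
Proof. intro h. unfold cif. destruct excluded_middle_informative; tauto. Qed.
Lemma cif_F (P : Prop) u v : ~ P -> cif P u v = v.
Proof. intro h. unfold cif. destruct excluded_middle_informative; tauto. Qed.

Lemma rhob_val M L Kl Kr l r s : realizes M L -> kset M Kl l -> kset M Kr r ->
  rhob M l r s = rho_of Kl Kr s.
Proof.
  intros HR hl hr. unfold rhob, rho_of.
  assert (Ur : forall K, kset M K r -> K = Kr) by (intros K h; apply (kset_uniq M L K Kr r HR h hr)).
  assert (Ul : forall K, kset M K l -> K = Kl) by (intros K h; apply (kset_uniq M L K Kl l HR h hl)).
  destruct Kr.
  - rewrite cif_F by (intro h; specialize (Ur KBi h); discriminate).
    destruct Kl; [rewrite cif_F| rewrite cif_F| rewrite cif_T]; auto;
    intro h; specialize (Ul KBi h); discriminate.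
  - rewrite cif_F by (intro h; specialize (Ur KBi h); discriminate).
    destruct Kl; [rewrite cif_F| rewrite cif_F| rewrite cif_T]; auto;
    intro h; specialize (Ul KBi h); discriminate.
  - rewrite cif_T; auto.
Qed.

Lemma sq_range s : 0 < s < 1 -> 0 < s * s < 1.
Proof. intros; nra. Qed.
Lemma sqrt_range s : 0 < s < 1 -> 0 < sqrt s < 1.
Proof.
  intros h. split; [apply sqrt_lt_R0; lra|]. rewrite <- sqrt_1. apply sqrt_lt_1; lra.
Qed.

Lemma rhob_range M l r s : 0 < s < 1 -> 0 < rhob M l r s < 1.
Proof.
  intros h. unfold rhob, cif.
  destruct excluded_middle_informative; [apply sq_range; auto|].
  destruct excluded_middle_informative; [apply sqrt_range; auto|auto].
Qed.

Lemma rhob_mono M l r s t : 0 < s -> s < t -> t < 1 -> rhob M l r s < rhob M l r t.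
Proof.
  intros h1 h2 h3. unfold rhob, cif.
  destruct excluded_middle_informative; [nra|].
  destruct excluded_middle_informative; [apply sqrt_lt_1; lra|lra].
Qed.

Lemma rho_cycle Kl Kr s : Kl <> Kr -> 0 < s < 1 ->
  rho_of (bk (bk Kl)) (bk (bk Kr)) (rho_of (bk Kl) (bk Kr) (rho_of Kl Kr s)) = s.
Proof.
  intros hK hs. assert (sqrt (s * s) = s) by (apply sqrt_square; lra).
  assert (sqrt s * sqrt s = s) by (apply sqrt_sqrt; lra).
  destruct Kl, Kr; simpl; try (exfalso; apply hK; reflexivity); auto.
Qed.

Lemma frac_lin a b u : a < b -> (a + (b - a) * u - a) / (b - a) = u.
Proof. intros h. field. lra. Qed.

Lemma IZR1 : IZR 1 = 1. Proof. reflexivity. Qed.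
Lemma IZRm1 : IZR (-1) = -1. Proof. reflexivity. Qed.

Lemma GI_p1 M L l r : realizes M L -> GI M l r -> GI M (l + 1) (r + 1).
Proof. intros HR h. apply (GI_shift M L l r 1 HR h). Qed.
Lemma GI_m1 M L l r : realizes M L -> GI M l r -> GI M (l - 1) (r - 1).
Proof.
  intros HR h. replace (l - 1) with (l + IZR (-1)) by (simpl; ring).
  replace (r - 1) with (r + IZR (-1)) by (simpl; ring). apply (GI_shift M L); auto.
Qed.
Lemma PGI_p1 M L l r : realizes M L -> PGI M l r -> PGI M (l + 1) (r + 1).
Proof. intros HR h. apply (PGI_shift M L l r 1 HR h). Qed.
Lemma PGI_m1 M L l r : realizes M L -> PGI M l r -> PGI M (l - 1) (r - 1).
Proof.
  intros HR h. replace (l - 1) with (l + IZR (-1)) by (simpl; ring).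
  replace (r - 1) with (r + IZR (-1)) by (simpl; ring). apply (PGI_shift M L); auto.
Qed.

Lemma rhob_per M L l r s : realizes M L -> rhob M (l + 1) (r + 1) s = rhob M l r s.
Proof.
  intros HR.
  assert (E : forall x, setBi M (x + IZR 1) <-> setBi M x) by (intro x; apply (kset_shift M L KBi x 1 HR)).
  unfold rhob, cif.
  destruct (excluded_middle_informative (setBi M (r + IZR 1))) as [h1|h1];
  destruct (excluded_middle_informative (setBi M r)) as [h2|h2]; try (rewrite E in h1; tauto);
  destruct (excluded_middle_informative (setBi M (l + IZR 1))) as [h3|h3];
  destruct (excluded_middle_informative (setBi M l)) as [h4|h4]; try (rewrite E in h3; tauto); auto.
Qed.

Lemma X_notin_GI M x : Xs M x -> ~ (exists l r, inI (GI M) x l r).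
Proof. intros hx [l [r [hG h]]]. apply (GI_noX M l r x hG h hx). Qed.
Lemma X_notin_PGI M x : Xs M x -> ~ (exists l r, inI (PGI M) x l r).
Proof. intros hx [l [r [hG h]]]. apply (GI_noX M l r x (proj1 hG) h hx). Qed.

Lemma bmod_X M x : Xs M x -> bmod M x = mb M x.
Proof. intros h. apply twist_out. apply X_notin_GI; auto. Qed.
Lemma amod_X M x : Xs M x -> amod M x = ma M x.
Proof. intros h. apply twist_out. apply X_notin_PGI; auto. Qed.

Lemma bmod_step M L x l r Kl Kr : BH M L -> inI (GI M) x l r -> kset M Kl l -> kset M Kr r ->
  bmod M x = mb M l + (mb M r - mb M l) * rho_of Kl Kr ((x - l) / (r - l)) /\
  inI (GI M) (bmod M x) (mb M l) (mb M r) /\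
  (bmod M x - mb M l) / (mb M r - mb M l) = rho_of Kl Kr ((x - l) / (r - l)) /\
  kset M (bk Kl) (mb M l) /\ kset M (bk Kr) (mb M r).
Proof.
  intros HH hx hl hr. pose proof HH as (HR & Hb & _). pose proof Hb as (_ & Hi & _).
  assert (E : bmod M x = mb M l + (mb M r - mb M l) * rho_of Kl Kr ((x - l) / (r - l))).
  { unfold bmod. rewrite (twist_in _ _ _ x l r (GI_uniq M) hx). rewrite (rhob_val M L Kl Kr); auto. }
  destruct hx as [hG hx].
  pose proof (frac_in l r x hx) as hs.
  assert (0 < rho_of Kl Kr ((x - l) / (r - l)) < 1).
  { rewrite <- (rhob_val M L Kl Kr l r); auto. apply rhob_range; auto. }
  assert (mb M l < mb M r) by (apply Hi; lra).
  split; auto. split; [split; [apply (GI_b M L); auto|]; rewrite E; nra|].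
  split; [rewrite E; apply frac_lin; auto|].
  split; apply (bk_kset M L); auto.
Qed.

Lemma bmod_incr M L : BH M L -> forall x y, x < y -> bmod M x < bmod M y.
Proof.
  intros HH. pose proof HH as (HR & Hb & _). pose proof Hb as (_ & Hi & _).
  apply twist_mono; auto.
  - apply GI_uniq.
  - intros; apply rhob_range; auto.
  - intros; apply rhob_mono; auto.
Qed.

Lemma bmod_per M L : BH M L -> forall x, bmod M (x + 1) = bmod M x + 1.
Proof.
  intros HH. pose proof HH as (HR & Hb & _). pose proof Hb as (_ & _ & Hp).
  apply twist_per; auto.
  - apply GI_uniq.
  - intros; apply (GI_p1 M L); auto.
  - intros; apply (GI_m1 M L); auto.
  - intros; apply (rhob_per M L); auto.
Qed.

Lemma bmod_cube M L x : BH M L -> eqc (bmod M (bmod M (bmod M x))) x.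
Proof.
  intros HH. pose proof HH as (HR & Hb & H3 & _ & _ & HB).
  destruct (classic (exists l r, inI (GI M) x l r)) as [[l [r hx]]|nx].
  - destruct (GI_types M L l r HR HB (proj1 hx)) as (Kl & Kr & hK & hl & hr).
    destruct (bmod_step M L x l r Kl Kr HH hx hl hr) as (E1 & I1 & F1 & k1l & k1r).
    destruct (bmod_step M L _ _ _ _ _ HH I1 k1l k1r) as (E2 & I2 & F2 & k2l & k2r).
    destruct (bmod_step M L _ _ _ _ _ HH I2 k2l k2r) as (E3 & I3 & F3 & k3l & k3r).
    rewrite E3, F2, F1. rewrite rho_cycle; auto; [|apply frac_in; apply hx].
    destruct (b3_gap M L l r HH (proj1 hx)) as (m & e1 & e2). rewrite e1, e2.
    exists (- m)%Z. rewrite opp_IZR. field. destruct hx as [[h _] _]. lra.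
  - assert (n1 : ~ (exists l r, inI (GI M) (mb M x) l r)).
    { intros [l [r h]]. apply nx. apply (GI_pre_b M L x l r HH h). }
    assert (n2 : ~ (exists l r, inI (GI M) (mb M (mb M x)) l r)).
    { intros [l [r h]]. apply n1. apply (GI_pre_b M L _ l r HH h). }
    unfold bmod at 3. rewrite (twist_out _ _ _ _ nx). fold (bmod M).
    unfold bmod at 2. rewrite (twist_out _ _ _ _ n1). fold (bmod M).
    unfold bmod. rewrite (twist_out _ _ _ _ n2). apply H3.
Qed.

Lemma shift_gen F : (forall x, F (x + 1) = F x + 1) -> forall m x, F (x + IZR m) = F x + IZR m.
Proof. intros H m x. apply shiftZ; auto. Qed.

Lemma bmod_homeo M L : BH M L -> is_circ_homeo (bmod M).
Proof.
  intros HH. pose proof (bmod_incr M L HH) as Hi. pose proof (bmod_per M L HH) as Hp.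
  split; [|split; auto].
  apply cont_mono_surj; auto. intros y.
  destruct (bmod_cube M L y HH) as [m e].
  exists (bmod M (bmod M y) + IZR m). rewrite (shift_gen _ Hp). auto.
Qed.

Lemma amod_step M L x l r : AH M L -> inI (PGI M) x l r ->
  amod M x = ma M l + (ma M r - ma M l) * ((x - l) / (r - l)) /\
  inI (PGI M) (amod M x) (ma M l) (ma M r) /\
  (amod M x - ma M l) / (ma M r - ma M l) = (x - l) / (r - l).
Proof.
  intros HH hx. pose proof HH as (HR & Ha & _). pose proof Ha as (_ & Hi & _).
  assert (E : amod M x = ma M l + (ma M r - ma M l) * ((x - l) / (r - l))).
  { unfold amod. rewrite (twist_in _ _ _ x l r (PGI_uniq M) hx). auto. }
  destruct hx as [hG hx].
  pose proof (frac_in l r x hx) as hs.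
  assert (ma M l < ma M r) by (apply Hi; apply hG).
  split; auto. split; [split; [apply (PGI_a M L); auto|]; rewrite E; nra|].
  rewrite E; apply frac_lin; auto.
Qed.

Lemma amod_incr M L : AH M L -> forall x y, x < y -> amod M x < amod M y.
Proof.
  intros HH. pose proof HH as (HR & Ha & _). pose proof Ha as (_ & Hi & _).
  apply twist_mono; auto; [apply PGI_uniq|..]; intros; lra.
Qed.

Lemma amod_per M L : AH M L -> forall x, amod M (x + 1) = amod M x + 1.
Proof.
  intros HH. pose proof HH as (HR & Ha & _). pose proof Ha as (_ & _ & Hp).
  apply twist_per; auto.
  - apply PGI_uniq.
  - intros; apply (PGI_p1 M L); auto.
  - intros; apply (PGI_m1 M L); auto.
Qed.

Lemma amod_inv M L x : AH M L -> eqc (amod M (amod M x)) x.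
Proof.
  intros HH. pose proof HH as (HR & Ha & H2 & _).
  destruct (classic (exists l r, inI (PGI M) x l r)) as [[l [r hx]]|nx].
  - destruct (amod_step M L x l r HH hx) as (E1 & I1 & F1).
    destruct (amod_step M L _ _ _ HH I1) as (E2 & I2 & F2).
    rewrite E2, F1.
    destruct (a2_gap M L l r HH (proj1 hx)) as (m & e1 & e2). rewrite e1, e2.
    exists (- m)%Z. rewrite opp_IZR. field. destruct hx as [[[h _] _] _]. lra.
  - assert (n1 : ~ (exists l r, inI (PGI M) (ma M x) l r)).
    { intros [l [r h]]. apply nx. apply (PGI_pre_a M L x l r HH h). }
    unfold amod at 2. rewrite (twist_out _ _ _ _ nx). fold (amod M).
    unfold amod. rewrite (twist_out _ _ _ _ n1). apply H2.
Qed.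

Lemma amod_homeo M L : AH M L -> is_circ_homeo (amod M).
Proof.
  intros HH. pose proof (amod_incr M L HH) as Hi. pose proof (amod_per M L HH) as Hp.
  split; [|split; auto].
  apply cont_mono_surj; auto. intros y.
  destruct (amod_inv M L y HH) as [m e].
  exists (amod M y + IZR m). rewrite (shift_gen _ Hp). auto.
Qed.


Definition Mp (M : msys) : msys := MSys (amod M) (bmod M) (setA M) (setB M) (setBi M).

Lemma markov_BH_AH M L : markov_conds M L -> BH M L /\ AH M L.
Proof.
  intros (Ha & Ha2 & Hb & Hb3 & Hnf & HR & Hc1 & Hc2 & HB & HC & HD1 & HD2 & HE1 & HE2 & HE3).
  exact (conj (conj HR (conj Hb (conj Hb3 (conj HD1 (conj HD2 HB))))) (conj HR (conj Ha (conj Ha2 (conj HC (conj HE1 HB)))))).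
Qed.

Lemma seteq_trans S T U : seteq S T -> seteq T U -> seteq S U.
Proof. intros h1 h2 x. specialize (h1 x); specialize (h2 x); tauto. Qed.
Lemma seteq_sym S T : seteq S T -> seteq T S.
Proof. intros h x. specialize (h x); tauto. Qed.

Lemma img_gap_sub M L f g i : realizes M L -> is_circ_homeo f -> is_circ_homeo g ->
  (forall x, Xs M x -> f x = g x) -> (i < lN L)%nat ->
  forall y, img g (gapS L i) y -> img f (gapS L i) y.
Proof.
  intros HR Hf Hg Hfg hi y (x & hx & ex).
  destruct (gapS_in L i x hx) as [m hm].
  pose proof (gapS_GI M L i m HR hi) as (hlr & Xl & Xr & _).
  pose proof Hf as (Hcf & Hif & _). pose proof Hg as (_ & Hig & _).
  assert (g (lr L i + IZR m) < g x < g (lnext L i + IZR m)) by (split; apply Hig; lra).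
  rewrite <- (Hfg (lr L i + IZR m)), <- (Hfg (lnext L i + IZR m)) in H by auto.
  destruct (surj_interval f Hcf Hif _ _ (g x) hlr H) as (x' & hx' & e).
  exists x'. split; [apply (in_gapS L i x' m); auto|]. rewrite e; auto.
Qed.

Lemma img_gap_eq M L f g i : realizes M L -> is_circ_homeo f -> is_circ_homeo g ->
  (forall x, Xs M x -> f x = g x) -> (i < lN L)%nat ->
  seteq (img g (gapS L i)) (img f (gapS L i)).
Proof.
  intros HR Hf Hg Hfg hi y. split; apply (img_gap_sub M L); auto.
  intros x hx; symmetry; auto.
Qed.

Lemma img_X_eq M f g (S : cset) : (forall x, S x -> Xs M x) -> (forall x, Xs M x -> f x = g x) ->
  seteq (img g S) (img f S).
Proof.
  intros HS Hfg y. split; intros (x & hx & e); exists x; split; auto;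
  [rewrite Hfg|rewrite <- Hfg]; auto.
Qed.

Lemma seteq_l S S' T : seteq S S' -> (seteq S T <-> seteq S' T).
Proof.
  intros h. split; intro h'.
  - apply seteq_trans with S; auto. apply seteq_sym; auto.
  - apply seteq_trans with S'; auto.
Qed.

Lemma Mp_markov M L : markov_conds M L -> markov_conds (Mp M) L.
Proof.
  intros HM. destruct (markov_BH_AH M L HM) as [HBH HAH].
  destruct HM as (Ha & Ha2 & Hb & Hb3 & Hnf & HR & Hc1 & Hc2 & HB & HC & HD1 & HD2 & HE1 & HE2 & HE3).
  pose proof (amod_homeo M L HAH) as Ha'. pose proof (bmod_homeo M L HBH) as Hb'.
  assert (EA : forall x, Xs M x -> ma M x = amod M x) by (intros; symmetry; apply amod_X; auto).
  assert (EB : forall x, Xs M x -> mb M x = bmod M x) by (intros; symmetry; apply bmod_X; auto).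
  assert (GA : forall i, (i < lN L)%nat -> seteq (img (amod M) (gapS L i)) (img (ma M) (gapS L i)))
    by (intros; apply (img_gap_eq M L); auto).
  assert (GB : forall i, (i < lN L)%nat -> seteq (img (bmod M) (gapS L i)) (img (mb M) (gapS L i)))
    by (intros; apply (img_gap_eq M L); auto).
  assert (SA : forall x, setA M x -> Xs M x) by (intros; left; auto).
  assert (SB : forall x, setB M x -> Xs M x) by (intros; right; left; auto).
  unfold markov_conds; simpl.
  split; auto. split; [intro x; apply (amod_inv M L); auto|].
  split; auto. split; [intro x; apply (bmod_cube M L); auto|].
  split.
  { destruct (classic (exists p, Xs M p)) as [[p hp]|np].
    - exists p. rewrite bmod_X by auto. intro e.
      apply Xs_kset in hp. destruct hp as [K hK].
      pose proof (bk_kset M L K p HBH hK) as h2.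
      pose proof (eqc_kset M L _ _ _ HR e h2) as h3.
      pose proof (kset_uniq M L _ _ _ HR hK h3). destruct K; discriminate.
    - destruct Hnf as [x hx]. exists x. unfold bmod. rewrite twist_out; auto.
      intros (l & r & [(_ & hl & _) _]). apply np; exists l; auto. }
  split; [exact HR|]. split; [auto|]. split; [auto|]. split; [auto|].
  split; [apply seteq_trans with (img (ma M) (setA M)); auto; apply (img_X_eq M); auto|].
  split; [apply seteq_trans with (img (mb M) (setA M)); auto; apply (img_X_eq M); auto|].
  split; [apply seteq_trans with (img (mb M) (setB M)); auto; apply (img_X_eq M); auto|].
  split.
  { intros i Pi. destruct (HE1 i Pi) as (j & Pj & hj). exists j. split; auto.
    apply seteq_trans with (img (ma M) (gapS L i)); auto. apply GA; apply Pi. }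
  split.
  { intros i Pi. specialize (HE2 i Pi). simpl in HE2.
    assert (EP : forall j, principal L j -> (seteq (img (bmod M) (gapS L i)) (gapS L j) <->
                      seteq (img (mb M) (gapS L i)) (gapS L j))) by
      (intros; apply seteq_l; apply GB; apply Pi).
    assert (EQ : forall j, principal L j -> (seteq (img (bmod M) (gapS L j)) (gapS L i) <->
                      seteq (img (mb M) (gapS L j)) (gapS L i))) by
      (intros j Pj; apply seteq_l; apply GB; apply Pj).
    assert (P1 : (exists j, principal L j /\ seteq (img (bmod M) (gapS L i)) (gapS L j)) <->
                 (exists j, principal L j /\ seteq (img (mb M) (gapS L i)) (gapS L j))).
    { split; intros (j & Pj & h); exists j; split; auto; apply (EP j Pj); auto. }
    assert (Q1 : (exists j, principal L j /\ seteq (img (bmod M) (gapS L j)) (gapS L i)) <->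
                 (exists j, principal L j /\ seteq (img (mb M) (gapS L j)) (gapS L i))).
    { split; intros (j & Pj & h); exists j; split; auto; apply (EQ j Pj); auto. }
    rewrite P1, Q1. exact HE2. }
  assert (Hadj : forall x y, gap_adj M L x y -> gap_adj (Mp M) L x y).
  { intros x y (Px & Py & h). split; auto. split; auto.
    destruct h as [h|[h|h]].
    + left. apply seteq_trans with (img (ma M) (gapS L x)); auto. apply GA, Px.
    + right; left. apply seteq_trans with (img (mb M) (gapS L x)); auto. apply GB, Px.
    + right; right. apply seteq_trans with (img (mb M) (gapS L y)); auto. apply GB, Py. }
  intros i j Pi Pj. specialize (HE3 i j Pi Pj). clear Pi Pj.
  induction HE3.
  - apply rt_step. apply Hadj; auto.
  - apply rt_refl.
  - apply rt_trans with y; auto.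
Qed.


Definition potI (M : msys) (l r y : R) : R :=
  cif (setA M l) ((y - l) / (r - l)) ((r - y) / (r - l)).

Lemma potI_A M l r y : setA M l -> potI M l r y = (y - l) / (r - l).
Proof. intros h. unfold potI. rewrite cif_T; auto. Qed.
Lemma potI_nA M l r y : l < r -> ~ setA M l -> potI M l r y = 1 - (y - l) / (r - l).
Proof. intros h1 h. unfold potI. rewrite cif_F; auto. field. lra. Qed.

Lemma kA_iff M L K x : realizes M L -> kset M K x -> (setA M x <-> K = KA).
Proof.
  intros HR hK. split; intro h.
  - apply (kset_uniq M L K KA x HR hK h).
  - subst; auto.
Qed.

Lemma eqc_inj F u v : is_circ_homeo F -> eqc (F u) (F v) -> eqc u v.
Proof.
  intros HF [m e]. exists m. rewrite <- (homeo_shift F HF) in e.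
  destruct HF as (_ & Hi & _). apply (incr_inj F Hi) in e. auto.
Qed.

Definition kA (K : kind) : bool := kind_eqb K KA.

Lemma potI_kind M L K l r y : realizes M L -> kset M K l -> l < r ->
  potI M l r y = if kA K then (y - l) / (r - l) else 1 - (y - l) / (r - l).
Proof.
  intros HR hK h. destruct K; simpl.
  - apply potI_A; auto.
  - apply potI_nA; auto. intro hA. pose proof (kset_uniq M L _ KA _ HR hK hA). discriminate.
  - apply potI_nA; auto. intro hA. pose proof (kset_uniq M L _ KA _ HR hK hA). discriminate.
Qed.

Lemma step M L0 L k g g' e i w l r :
  BH M L0 -> AH M L0 -> realizes M L -> valid_enum (Mp M) L k g g' e -> (i < k)%nat ->
  gapS L (g i) w -> inI (PGI M) w l r ->
  gapS L (g (if Nat.ltb (S i) k then S i else O)) (amod M (bsel (Mp M) e i w)) /\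
  exists l' r', inI (PGI M) (amod M (bsel (Mp M) e i w)) l' r' /\
    (potI M l' r' (amod M (bsel (Mp M) e i w)) = potI M l r w * potI M l r w \/
     potI M l' r' (amod M (bsel (Mp M) e i w)) = 1 - sqrt (1 - potI M l r w)).
Proof.
  intros HBH HAH HR VE hi hw hx.
  destruct VE as (V1 & V2 & V3 & V4).
  destruct (V1 i hi) as [Pg Pg']. destruct (V4 i hi) as [Vb Va]. simpl in Vb, Va.
  pose proof HBH as (HR0 & Hb & Hb3 & _ & _ & HB0).
  assert (hxG : inI (GI M) w l r) by (split; [apply hx|apply hx]).
  destruct (GI_types M L0 l r HR0 HB0 (proj1 hxG)) as (Kl & Kr & hK & kl & kr).
  assert (HPa : Kl = KA \/ Kr = KA).
  { destruct hx as [[_ [h|h]] _]; [left; apply (kA_iff M L0 Kl l HR0 kl)|right; apply (kA_iff M L0 Kr r HR0 kr)]; auto. }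
  assert (hlr : l < r) by apply hxG.
  pose proof (frac_in l r w (proj2 hx)) as hs.
  set (s := (w - l) / (r - l)) in *.
  assert (HP : potI M l r w = if kA Kl then s else 1 - s) by (apply (potI_kind M L0); auto).
  destruct (bmod_step M L0 w l r Kl Kr HBH hxG kl kr) as (E1 & I1 & F1 & k1l & k1r).
  fold s in E1, F1.
  assert (FIN : forall y l1 r1 K1, inI (PGI M) y l1 r1 -> kset M K1 l1 -> gapS L (g' i) y ->
     gapS L (g (if Nat.ltb (S i) k then S i else O)) (amod M y) /\
     exists l' r', inI (PGI M) (amod M y) l' r' /\
       potI M l' r' (amod M y) = if kA K1 then 1 - (y - l1) / (r1 - l1) else (y - l1) / (r1 - l1)).
  { intros y l1 r1 K1 hy kK hg. split.
    - apply Va. apply img_self; auto.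
    - destruct (amod_step M L0 y l1 r1 HAH hy) as (Ea & Ia & Fa).
      exists (ma M l1), (ma M r1). split; auto.
      assert (hlr1 : ma M l1 < ma M r1) by apply Ia.
      pose proof (A_swap M L0 l1 r1 HAH (proj1 hy)) as Sw.
      destruct K1; simpl.
      + rewrite potI_nA; auto; [rewrite Fa; auto|]. rewrite Sw. tauto.
      + rewrite potI_A; [rewrite Fa; auto|]. apply Sw. intro hA.
        pose proof (kset_uniq M L0 _ KA _ HR0 kK hA). discriminate.
      + rewrite potI_A; [rewrite Fa; auto|]. apply Sw. intro hA.
        pose proof (kset_uniq M L0 _ KA _ HR0 kK hA). discriminate. }
  assert (MKP : forall y l1 r1, inI (GI M) y l1 r1 -> gapS L (g' i) y -> inI (PGI M) y l1 r1).
  { intros y l1 r1 hy hg. destruct (gapS_in L (g' i) y hg) as [m hm].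
    pose proof (principal_PGI M L (g' i) m HR Pg') as HPG.
    destruct (GI_uniq M y l1 r1 _ _ hy (conj (proj1 HPG) hm)) as [e1 e2].
    rewrite e1, e2. split; auto. }
  unfold bsel. simpl. destruct (e i) eqn:Ei.
  - assert (hg : gapS L (g' i) (bmod M w)) by (apply Vb; apply img_self; auto).
    pose proof (MKP _ _ _ I1 hg) as IP.
    assert (HPb : bk Kl = KA \/ bk Kr = KA).
    { destruct IP as [[_ [h|h]] _]; [left; apply (kA_iff M L0 _ _ HR0 k1l)|right; apply (kA_iff M L0 _ _ HR0 k1r)]; auto. }
    destruct (FIN _ _ _ _ IP k1l hg) as [G1 (l' & r' & I2 & E2)].
    split; auto. exists l', r'. split; auto. rewrite E2, F1, HP.
    assert (sqrt (s * s) = s) by (apply sqrt_square; lra).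
    destruct Kl, Kr; simpl in *; try (exfalso; apply hK; reflexivity);
      try (destruct HPa as [h|h]; discriminate); try (destruct HPb as [h|h]; discriminate);
      try (replace (1 - (1 - s)) with s by ring);
      [left; reflexivity | right; reflexivity].
  - assert (hg : gapS L (g' i) (bmod M (bmod M w))).
    { destruct (proj2 (Vb w) hw) as (v & hv & ev).
      pose proof (bmod_cube M L0 w HBH) as ec.
      assert (eqc v (bmod M (bmod M w))).
      { apply (eqc_inj (bmod M)); [apply (bmod_homeo M L0 HBH)|].
        apply eqc_trans with w; auto. apply eqc_sym; auto. }
      destruct H as [m em]. rewrite em. apply gapS_shift. auto. }
    destruct (bmod_step M L0 _ _ _ _ _ HBH I1 k1l k1r) as (E2 & I2 & F2 & k2l & k2r).
    pose proof (MKP _ _ _ I2 hg) as IP.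
    assert (HPb : bk (bk Kl) = KA \/ bk (bk Kr) = KA).
    { destruct IP as [[_ [h|h]] _]; [left; apply (kA_iff M L0 _ _ HR0 k2l)|right; apply (kA_iff M L0 _ _ HR0 k2r)]; auto. }
    destruct (FIN _ _ _ _ IP k2l hg) as [G1 (l' & r' & I3 & E3)].
    split; auto. exists l', r'. split; auto. rewrite E3, F2, F1, HP.
    destruct Kl, Kr; simpl in *; try (exfalso; apply hK; reflexivity);
      try (destruct HPa as [h|h]; discriminate); try (destruct HPb as [h|h]; discriminate);
      try (replace (1 - (1 - s)) with s by ring);
      [left; reflexivity | right; reflexivity].
Qed.


Definition cf (p0 : R) : R := Rmax p0 (/ (1 + sqrt (1 - p0))).

Lemma cf_range p0 : 0 <= p0 < 1 -> 0 <= cf p0 < 1.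
Proof.
  intros h. assert (0 < sqrt (1 - p0)) by (apply sqrt_lt_R0; lra).
  assert (0 < / (1 + sqrt (1 - p0)) < 1).
  { split; [apply Rinv_0_lt_compat; lra|]. pose proof (Rinv_lt_contravar 1 (1 + sqrt (1 - p0)) ltac:(lra) ltac:(lra)) as HH. rewrite Rinv_1 in HH. lra. }
  unfold cf. split.
  - apply Rle_trans with p0; [lra|apply Rmax_l].
  - apply Rmax_lub_lt; lra.
Qed.

Lemma sigma_bound q q' p0 : 0 < q < 1 -> q <= p0 -> p0 < 1 ->
  (q' = q * q \/ q' = 1 - sqrt (1 - q)) -> q' <= cf p0 * q.
Proof.
  intros hq hp0 hp1 [e|e]; subst q'.
  - pose proof (Rmax_l p0 (/ (1 + sqrt (1 - p0)))). fold (cf p0) in H. nra.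
  - set (t := sqrt (1 - q)). set (t0 := sqrt (1 - p0)).
    assert (tt : t * t = 1 - q) by (apply sqrt_sqrt; lra).
    assert (ht : t0 <= t) by (apply sqrt_le_1_alt; lra).
    assert (ht0 : 0 < t0) by (apply sqrt_lt_R0; lra).
    assert (t <= 1).
    { unfold t. pose proof (sqrt_le_1_alt (1 - q) 1 ltac:(lra)) as HH. rewrite sqrt_1 in HH. lra. }
    assert ((1 - t) * (1 + t0) <= q) by nra.
    assert (1 - t <= q * / (1 + t0)).
    { replace (1 - t) with ((1 - t) * (1 + t0) * / (1 + t0)) by (field; lra).
      apply Rmult_le_compat_r; [left; apply Rinv_0_lt_compat; lra|lra]. }
    pose proof (Rmax_r p0 (/ (1 + t0))) as Hm. unfold cf. change (sqrt (1 - p0)) with t0.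
    assert (0 < / (1 + t0)) by (apply Rinv_0_lt_compat; lra). nra.
Qed.

Lemma potI_range M l r y : l < y < r -> 0 < potI M l r y < 1.
Proof.
  intros h. unfold potI, cif. destruct excluded_middle_informative.
  - apply frac_in; auto.
  - replace ((r - y) / (r - l)) with (1 - (y - l) / (r - l)) by (field; lra).
    pose proof (frac_in l r y h). lra.
Qed.

Lemma potI_shift M L l r y m : realizes M L ->
  potI M (l + IZR m) (r + IZR m) (y + IZR m) = potI M l r y.
Proof.
  intros HR. unfold potI, cif.
  replace (y + IZR m - (l + IZR m)) with (y - l) by ring.
  replace (r + IZR m - (l + IZR m)) with (r - l) by ring.
  replace (r + IZR m - (y + IZR m)) with (r - y) by ring.
  destruct (excluded_middle_informative (setA M (l + IZR m))) as [h1|h1];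
  destruct (excluded_middle_informative (setA M l)) as [h2|h2]; auto; exfalso.
  - apply h2. apply (kset_shift M L KA l m HR). exact h1.
  - apply h1. apply (kset_shift M L KA l m HR). exact h2.
Qed.

Lemma pow_le1 c n : 0 <= c <= 1 -> 0 <= c ^ n <= 1.
Proof.
  intros h. induction n; simpl; [lra|]. split; [apply Rmult_le_pos; lra|]. nra.
Qed.

Lemma cycle M L0 L k g g' e w l r p0 :
  BH M L0 -> AH M L0 -> realizes M L -> valid_enum (Mp M) L k g g' e -> (0 < k)%nat ->
  gapS L (g O) w -> inI (PGI M) w l r -> potI M l r w <= p0 -> p0 < 1 ->
  forall n, (n <= k)%nat ->
  gapS L (if Nat.ltb n k then g n else g O) (fcomp (Mp M) e n w) /\
  exists l' r', inI (PGI M) (fcomp (Mp M) e n w) l' r' /\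
    potI M l' r' (fcomp (Mp M) e n w) <= cf p0 ^ n * potI M l r w.
Proof.
  intros HBH HAH HR VE hk hw hx hp0 hp1.
  pose proof (potI_range M l r w (proj2 hx)) as hpr.
  pose proof (cf_range p0 ltac:(lra)) as hc.
  induction n; intro hn.
  - simpl. assert (Nat.ltb 0 k = true) by (apply Nat.ltb_lt; auto). rewrite H.
    split; auto. exists l, r. split; auto. lra.
  - destruct (IHn ltac:(lia)) as [hg (l1 & r1 & h1 & hp)].
    assert (Nat.ltb n k = true) by (apply Nat.ltb_lt; lia). rewrite H in hg.
    destruct (step M L0 L k g g' e n _ l1 r1 HBH HAH HR VE ltac:(lia) hg h1) as [G (l' & r' & I' & P')].
    simpl fcomp. split.
    + destruct (Nat.ltb (S n) k); auto.
    + exists l', r'. split; auto.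
      pose proof (potI_range M l1 r1 _ (proj2 h1)).
      pose proof (pow_le1 (cf p0) n ltac:(lra)).
      assert (potI M l1 r1 (fcomp (Mp M) e n w) <= p0) by nra.
      pose proof (sigma_bound _ _ p0 H0 H2 hp1 P'). simpl. nra.
Qed.

Lemma cdist_le x y m : Rabs (x - y - IZR m) < 1 -> cdist x y <= Rabs (x - y - IZR m).
Proof.
  intros h. unfold cdist. set (d := x - y - IZR m) in *.
  destruct (Rle_dec 0 d) as [c|c].
  - rewrite Rabs_right in * by lra.
    destruct (Int_part_frac_part_spec (x - y) m d ltac:(lra) ltac:(unfold d; ring)) as [_ e].
    rewrite <- e. apply Rmin_l.
  - rewrite Rabs_left in * by lra.
    destruct (Int_part_frac_part_spec (x - y) (m - 1) (d + 1) ltac:(lra)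
      ltac:(unfold d; rewrite minus_IZR; simpl; ring)) as [_ e].
    rewrite <- e. eapply Rle_trans; [apply Rmin_r|lra].
Qed.

Lemma cdist_ge0 x y : 0 <= cdist x y.
Proof.
  unfold cdist. pose proof (base_fp (x - y)). apply Rmin_glb; lra.
Qed.

Lemma GI_notAA M L l r : realizes M L ->
  (forall i, (i < lN L)%nat -> lab L i <> lab L (nxt L i)) ->
  GI M l r -> setA M l -> setA M r -> False.
Proof.
  intros HR HB HG hl hr. destruct (GI_types M L l r HR HB HG) as (Kl & Kr & hK & kl & kr).
  pose proof (kset_uniq M L _ KA _ HR kl hl). pose proof (kset_uniq M L _ KA _ HR kr hr).
  subst; auto.
Qed.

Lemma Mp_equiv M L : realizes M L -> equivalent M (Mp M).
Proof.
  intros HR. exists (fun x => x).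
  assert (Hi : forall x y : R, x < y -> x < y) by auto.
  split; [split; [apply cont_mono_surj; auto; intro y; exists y; auto|split; auto]|].
  assert (G : forall K, seteq (img (fun x => x) (kset M K)) (kset M K)).
  { intros K y. split.
    - intros (x & hx & ex). apply (eqc_kset M L K x); auto.
    - intros h. exists y. split; auto. apply eqc_refl. }
  split; [apply (G KA)|]. split; [apply (G KB)|apply (G KBi)].
Qed.


Lemma iter_bound M L0 L k g g' e z l r :
  BH M L0 -> AH M L0 -> realizes M L -> valid_enum (Mp M) L k g g' e -> (0 < k)%nat ->
  gapS L (g O) z -> inI (PGI M) z l r ->
  forall n, gapS L (g O) (Nat.iter n (fcomp (Mp M) e k) z) /\
    exists l' r', inI (PGI M) (Nat.iter n (fcomp (Mp M) e k) z) l' r' /\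
      potI M l' r' (Nat.iter n (fcomp (Mp M) e k) z) <= cf (potI M l r z) ^ n * potI M l r z.
Proof.
  intros HBH HAH HR VE hk hz hx.
  set (p := potI M l r z). pose proof (potI_range M l r z (proj2 hx)) as hp. fold p in hp.
  pose proof (cf_range p ltac:(lra)) as hc.
  induction n.
  - simpl. split; auto. exists l, r. split; auto. fold p. lra.
  - destruct IHn as [hg (l1 & r1 & h1 & hb)].
    pose proof (pow_le1 (cf p) n ltac:(lra)).
    pose proof (potI_range M l1 r1 _ (proj2 h1)).
    destruct (cycle M L0 L k g g' e _ l1 r1 p HBH HAH HR VE hk hg h1 ltac:(nra) ltac:(lra) k (le_n k))
      as [G (l' & r' & I' & P')].
    rewrite Nat.ltb_irrefl in G. simpl. split; auto. exists l', r'. split; auto.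
    assert (cf p ^ k <= cf p).
    { destruct k; [lia|]. simpl. pose proof (pow_le1 (cf p) k ltac:(lra)). nra. }
    nra.
Qed.

Theorem lemma10p1 :
  forall M : msys, is_markov M ->
  exists M' : msys, is_markov M' /\ equivalent M M' /\ prop_star M'.
Proof.
  intros M [L0 HM]. exists (Mp M).
  destruct (markov_BH_AH M L0 HM) as [HBH HAH]. pose proof (proj1 HBH) as HR0.
  pose proof HBH as (_ & _ & _ & _ & _ & HB0).
  split; [exists L0; apply Mp_markov; auto|].
  split; [apply (Mp_equiv M L0); auto|].
  unfold prop_star. intros L HR' k g g' e VE hk. set (f1 := fcomp (Mp M) e k).
  assert (HR : realizes M L) by exact HR'.
  destruct (proj1 VE O hk) as [P0 _].
  assert (GETI : forall z, gapS L (g O) z -> exists l r, inI (PGI M) z l r /\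
            exists m, l = lr L (g O) + IZR m /\ r = lnext L (g O) + IZR m).
  { intros z hz. destruct (gapS_in L (g O) z hz) as [m hm].
    exists (lr L (g O) + IZR m), (lnext L (g O) + IZR m). split; [split; auto|eauto].
    apply principal_PGI; auto. }
  split.
  - intros (z & hz & ez). destruct (GETI z hz) as (l & r & hx & _).
    set (p := potI M l r z). pose proof (potI_range M l r z (proj2 hx)) as hp. fold p in hp.
    pose proof (cf_range p ltac:(lra)) as hc.
    destruct (cycle M L0 L k g g' e z l r p HBH HAH HR VE hk hz hx ltac:(unfold p; lra) ltac:(lra) k (le_n k))
      as [_ (l' & r' & I' & P')].
    fold f1 in I', P'. fold p in P'.
    destruct ez as [t et].
    assert (I2 : inI (PGI M) (f1 z) (l + IZR (- t)) (r + IZR (- t))).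
    { split; [apply (PGI_shift M L); auto; apply hx|]. rewrite opp_IZR. destruct hx as [_ hx]. lra. }
    destruct (PGI_uniq M _ _ _ _ _ I' I2) as [e1 e2].
    assert (f1 z = z + IZR (- t)) by (rewrite opp_IZR; lra).
    rewrite e1, e2, H, (potI_shift M L) in P'; auto. fold p in P'.
    assert (cf p ^ k <= cf p).
    { destruct k; [lia|]. simpl. pose proof (pow_le1 (cf p) k ltac:(lra)). nra. }
    nra.
  - intros z hz q hq hA.
    destruct (GETI z hz) as (l & r & hx & _).
    set (p := potI M l r z). pose proof (potI_range M l r z (proj2 hx)) as hp. fold p in hp.
    pose proof (cf_range p ltac:(lra)) as hc.
    pose proof (iter_bound M L0 L k g g' e z l r HBH HAH HR VE hk hz hx) as IB. fold p in IB.
    intros eps heps.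
    destruct (pow_lt_1_zero (cf p) ltac:(rewrite Rabs_right; lra) eps heps) as [N HN].
    exists N. intros n hn. specialize (HN n hn). unfold R_dist. rewrite Rminus_0_r.
    rewrite Rabs_right by (apply Rle_ge, cdist_ge0).
    destruct (IB n) as [hg (l' & r' & I' & P')]. fold f1 in hg, I', P'.
    set (w := Nat.iter n f1 z) in *.
    destruct (GETI w hg) as (l2 & r2 & I2 & m & El & Er).
    destruct (PGI_uniq M _ _ _ _ _ I' I2) as [e1 e2]. subst l' r'.
    pose proof (pow_le1 (cf p) n ltac:(lra)).
    rewrite Rabs_right in HN by (apply Rle_ge; apply pow_le; lra).
    assert (Hlen : r2 <= l2 + 1) by (apply (GI_len M L); auto; apply I2).
    destruct I2 as [[HG2 _] hw].
    assert (potI M l2 r2 w < eps) by nra.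
    destruct hq as [eq|eq]; subst q.
    + assert (hA2 : setA M l2) by (rewrite El; apply (kset_shift M L KA _ m HR); exact hA).
      rewrite potI_A in H0 by auto.
      assert (cdist w (lr L (g O)) <= Rabs (w - lr L (g O) - IZR m)) by
        (apply cdist_le; rewrite Rabs_right; lra).
      rewrite Rabs_right in H1 by lra.
      assert (w - l2 <= (w - l2) / (r2 - l2)).
      { apply (Rmult_le_reg_r (r2 - l2)); [lra|]. unfold Rdiv.
        rewrite Rmult_assoc, Rinv_l by lra. nra. }
      lra.
    + assert (hA2 : setA M r2) by (rewrite Er; apply (kset_shift M L KA _ m HR); exact hA).
      assert (~ setA M l2) by (intro h; apply (GI_notAA M L0 l2 r2 HR0 HB0 HG2 h hA2)).
      rewrite potI_nA in H0 by (auto; lra).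
      assert (cdist w (lnext L (g O)) <= Rabs (w - lnext L (g O) - IZR m)) by
        (apply cdist_le; rewrite Rabs_left; lra).
      rewrite Rabs_left in H2 by lra.
      assert (r2 - w <= 1 - (w - l2) / (r2 - l2)).
      { replace (1 - (w - l2) / (r2 - l2)) with ((r2 - w) / (r2 - l2)) by (field; lra).
        apply (Rmult_le_reg_r (r2 - l2)); [lra|]. unfold Rdiv.
        rewrite Rmult_assoc, Rinv_l by lra. nra. }
      lra.
Qed.
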